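(* Let $i\in[n]$, let $S^\ast\subseteq[n]\setminus\{i\}$, and let $\mathcal{G}$ be a DAG on $[n]$ such that the induced subgraph $\mathcal{G}|_{S^\ast}$ has no edges. Let $\mathcal{H}$ be the graph identical to $\mathcal{G}$ but with all the edges $j\to i$ for $j\in S^\ast$. If $\mathcal{H}$ is a DAG, then $\operatorname{conv}(c_\mathcal{G},c_\mathcal{H})$ is an edge of $\mathrm{CIM}_n$.
   Context: For a directed acyclic graph (DAG) $\mathcal{G}$ on vertex set $[n]=\{1,\dots,n\}$, the characteristic imset $c_\mathcal{G}$ is the 0/1-vector indexed by the subsets $S\subseteq[n]$ with $|S|\geq 2$, with $c_\mathcal{G}(S)=1$ if there exists $i\in S$ such that $S\subseteq \mathrm{pa}_\mathcal{G}(i)\cup\{i\}$ (where $\mathrm{pa}_\mathcal{G}(i)$ is the set of parents of $i$), and $c_\mathcal{G}(S)=0$ otherwise. The characteristic imset polytope is $\mathrm{CIM}_n=\operatorname{conv}(c_\mathcal{G}\colon \mathcal{G}\text{ a DAG on }[n])$. *)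

(* Defs.v *)
From HB Require Import structures.
From mathcomp Require Import all_boot all_order all_algebra.
Set Implicit Arguments. Unset Strict Implicit. Unset Printing Implicit Defensive.
Import Order.TTheory GRing.Theory Num.Theory.
Local Open Scope ring_scope.

(* A directed graph on [n] = 'I_n, given by its set of arcs (j,k) meaning j -> k. *)
Definition digraph (n : nat) := {set 'I_n * 'I_n}.

Definition arc_rel n (G : digraph n) : rel 'I_n := fun a b => (a, b) \in G.

Definition is_dag n (G : digraph n) : bool :=
  [forall x : 'I_n, forall y : 'I_n, ((x, y) \in G) ==> ~~ connect (arc_rel G) y x].

Definition pa n (G : digraph n) (i : 'I_n) : {set 'I_n} := [set j | (j, i) \in G].

(* Coordinates of the characteristic imset: subsets S of [n] with |S| >= 2. *)
Definition coord (n : nat) := {S : {set 'I_n} | 1 < #|S|}%N.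

Definition point (R : Type) (n : nat) := coord n -> R.

Definition cim (R : realFieldType) n (G : digraph n) : point R n :=
  fun S => if [exists i in val S, val S \subset pa G i :|: [set i]] then 1 else 0.

Definition in_conv (R : realFieldType) n (I : finType) (A : pred I) (f : I -> point R n)
  (x : point R n) : Prop :=
  exists l : I -> R, (forall k, 0 <= l k) /\ (forall k, ~~ A k -> l k = 0) /\
    \sum_k l k = 1 /\ forall S, x S = \sum_k l k * f k S.

Definition CIM (R : realFieldType) n : point R n -> Prop :=
  in_conv (fun G : digraph n => is_dag G) (@cim R n).

Definition segment (R : realFieldType) n (a b : point R n) : point R n -> Prop :=
  in_conv (I := bool) predT (fun t => if t then a else b).

Definition dot (R : realFieldType) n (w x : point R n) : R := \sum_S w S * x S.

Definition is_face (R : realFieldType) n (P F : point R n -> Prop) : Prop :=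
  exists (w : point R n) (c : R), (forall x, P x -> dot w x <= c) /\
    (forall x, F x <-> (P x /\ dot w x = c)).

Definition is_edge (R : realFieldType) n (P : point R n -> Prop) (a b : point R n) : Prop :=
  (exists S, a S != b S) /\ is_face P (segment a b).

Definition add_parents n (G : digraph n) (i : 'I_n) (S : {set 'I_n}) : digraph n :=
  G :|: [set (j, i) | j in S].

(* Main.v *)
Require Import Defs.
From HB Require Import structures.
From mathcomp Require Import all_boot all_order all_algebra.
From mathcomp Require Import lra.
Import Order.TTheory GRing.Theory Num.Theory.
Set Implicit Arguments. Unset Strict Implicit. Unset Printing Implicit Defensive.

Section Graphs.
Variable n : nat.

Definition inT (K : digraph n) (S : {set 'I_n}) : bool :=
  [exists k in S, S \subset pa K k :|: [set k]].

Definition adj (K : digraph n) a b := ((a, b) \in K) || ((b, a) \in K).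

Lemma inTP (K : digraph n) (S : {set 'I_n}) : reflect (exists2 k, k \in S & forall y, y \in S -> y = k \/ (y, k) \in K)
  (inT K S).
Proof.
apply: (iffP existsP) => [[k /andP[kS /subsetP sub]]|[k kS H]].
  exists k => // y yS; move: (sub y yS); rewrite !inE => /orP[->|/eqP->]; by auto.
exists k; rewrite kS /=; apply/subsetP => y yS; rewrite !inE.
by case: (H y yS) => [->|->]; rewrite ?eqxx ?orbT.
Qed.

Lemma dagE (K : digraph n) (a b : 'I_n) : is_dag K -> (a, b) \in K -> ~~ connect (arc_rel K) b a.
Proof. by move=> /forallP/(_ a)/forallP/(_ b)/implyP. Qed.

Lemma dag_irr (K : digraph n) (a : 'I_n) : is_dag K -> (a, a) \in K -> False.
Proof. by move=> dK aa; move: (dagE dK aa); rewrite connect0. Qed.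

Lemma dag_no2 (K : digraph n) (a b : 'I_n) : is_dag K -> (a, b) \in K -> (b, a) \in K -> False.
Proof. by move=> dK ab ba; move: (dagE dK ab); rewrite connect1. Qed.

Lemma dag_no3 (K : digraph n) (a b c : 'I_n) : is_dag K -> (a, b) \in K -> (b, c) \in K -> (c, a) \in K -> False.
Proof.
move=> dK ab bc ca; move: (dagE dK ca).
by rewrite (connect_trans (connect1 (ab : arc_rel K a b)) (connect1 (bc : arc_rel K b c))).
Qed.

Lemma inT2 (K : digraph n) (a b : 'I_n) : a != b -> inT K [set a; b] = adj K a b.
Proof.
move=> ab; apply/inTP/idP => [[k] |].
  rewrite !inE => /orP[]/eqP-> H.
    case: (H b); rewrite ?inE ?eqxx ?orbT //.
      by move/eqP; rewrite eq_sym (negbTE ab).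
    by rewrite /adj => ->; rewrite orbT.
  case: (H a); rewrite ?inE ?eqxx ?orbT //.
    by move/eqP; rewrite (negbTE ab).
  by rewrite /adj => ->.
rewrite /adj => /orP[] e.
  exists b; rewrite ?inE ?eqxx ?orbT // => y; rewrite !inE => /orP[]/eqP->; by auto.
exists a; rewrite ?inE ?eqxx ?orbT // => y; rewrite !inE => /orP[]/eqP->; by auto.
Qed.

End Graphs.

Section Main.
Variable n : nat.
Variable i : 'I_n.
Variable Sst : {set 'I_n}.
Variable G : digraph n.
Hypothesis hi : i \notin Sst.
Hypothesis dG : is_dag G.
Hypothesis indep : forall j k, j \in Sst -> k \in Sst -> (j, k) \notin G.
Hypothesis dH : is_dag (add_parents G i Sst).

Let Hh := add_parents G i Sst.
Let Pset := pa G i.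
Let Nset := Sst :\: Pset.
Let Zset := i |: (Pset :|: Sst).
Definition Dset (S : {set 'I_n}) : bool :=
  [&& i \in S, S \subset Zset & [exists j in S, j \in Nset]].

Lemma inHh a b : ((a, b) \in Hh) = ((a, b) \in G) || ((b == i) && (a \in Sst)).
Proof.
rewrite /Hh /add_parents inE; congr (_ || _).
apply/imsetP/andP => [[j jS [-> ->]]|[/eqP-> aS]]; first by rewrite eqxx.
by exists a.
Qed.

Lemma GsubH a b : (a, b) \in G -> (a, b) \in Hh.
Proof. by rewrite inHh => ->. Qed.

Lemma inZ y : (y \in Zset) = (y == i) || (y \in Pset) || (y \in Sst).
Proof. by rewrite !inE orbA. Qed.

Lemma inPset y : (y \in Pset) = ((y, i) \in G).
Proof. by rewrite /Pset /pa inE. Qed.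

Lemma mono S : inT G S -> inT Hh S.
Proof.
move/inTP=> [k kS H]; apply/inTP; exists k => // y yS.
by case: (H y yS) => [->|/GsubH]; auto.
Qed.

Lemma D1 S : Dset S -> inT Hh S.
Proof.
case/and3P=> iS /subsetP SZ _; apply/inTP; exists i => // y yS.
move: (SZ y yS); rewrite inZ => /orP[/orP[/eqP->|]|]; first by auto.
  by rewrite inPset => /GsubH; auto.
by move=> yS'; right; rewrite inHh yS' eqxx orbT.
Qed.

Lemma D2 S : Dset S -> ~~ inT G S.
Proof.
case/and3P=> iS /subsetP SZ /existsP[j /andP[jS]].
rewrite /Nset inE => /andP[jP jSst].
apply/negP => /inTP[k kS H].
have ji : j != i by apply: contraNneq hi => <-.
case: (eqVneq k i) => [ki|ki].
  subst k; case: (H j jS) => [/eqP|]; first by rewrite (negbTE ji).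
  by rewrite -inPset (negbTE jP).
case: (H i iS) => [/eqP|ik]; first by rewrite eq_sym (negbTE ki).
move: (SZ k kS); rewrite inZ (negbTE ki) /= => /orP[].
  by rewrite inPset => ki'; apply: (dag_no2 dG ik ki').
move=> kSst; apply: (dag_no2 dH (GsubH ik)).
by rewrite inHh kSst eqxx orbT.
Qed.

Lemma D3 S : ~~ Dset S -> inT Hh S -> inT G S.
Proof.
move=> nD /inTP[k kS H]; apply/inTP; exists k => // y yS.
case: (eqVneq k i) => [ki|ki]; last first.
  case: (H y yS) => [|]; first by auto.
  by rewrite inHh (negbTE ki) andFb orbF; auto.
subst k; case: (eqVneq y i) => [->|yi]; first by auto.
right; rewrite -inPset.
case: (H y yS) => [/eqP|]; first by rewrite (negbTE yi).
rewrite inHh eqxx /= -inPset => /orP[//|ySst].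
apply: contraR nD => yP; apply/and3P; split => //.
  apply/subsetP => z zS; rewrite inZ.
  case: (H z zS) => [->|]; first by rewrite eqxx.
  by rewrite inHh eqxx /= -inPset => /orP[->|->]; rewrite ?orbT.
by apply/existsP; exists y; rewrite yS /Nset inE yP ySst.
Qed.


Definition pairR (S T : {set 'I_n}) : bool :=
  [&& Dset S, Dset T &
    [exists x, [&& x \notin S, T == x |: S & [forall y in S :\ i, adj G x y]]] ||
    [exists x, [&& x \notin T, S == x |: T & ~~ [forall y in T :\ i, adj G x y]]]].

Lemma adjHG a b : a != i -> b != i -> adj Hh a b -> adj G a b.
Proof.
move=> ai bi; rewrite /adj !inHh (negbTE ai) (negbTE bi) /= !orbF //.
Qed.

Lemma adjG_neq a b : adj G a b -> a != b.
Proof.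
apply: contraTneq => ->; rewrite /adj orbb; apply/negP => /(dag_irr dG); done.
Qed.

Section Valid.
Variable K : digraph n.
Hypothesis dK : is_dag K.
Hypothesis sG2 : forall a b, adj G a b -> adj K a b.
Hypothesis sH2 : forall a b, a != b -> adj K a b -> adj Hh a b.

Lemma pair_valid S T : pairR S T -> inT K S -> inT K T.
Proof.
case/and3P=> DS DT /orP[]/existsP[x /and3P[xnS /eqP eT Hadj]].
- subst T.
  have [iS SZ /existsP[j /andP[jS]]] := and3P DS.
  rewrite /Nset inE => /andP[jP jSst].
  have [_ /subsetP TZ _] := and3P DT.
  have xi : x != i by apply: contraNneq xnS => ->.
  have ji : j != i by apply: contraNneq hi => <-.
  have xP : (x, i) \in G.
    move: (TZ x); rewrite !inE eqxx /= => /(_ isT); rewrite (negbTE xi) /=.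
    move=> /orP[//|xS].
    move/forallP: Hadj => /(_ j); rewrite !inE ji jS /= /adj.
    by rewrite (negbTE (indep xS jSst)) (negbTE (indep jSst xS)).
  have hxK : forall y, y \in S -> adj K x y.
    move=> y yS; apply: sG2; case: (eqVneq y i) => [->|yi]; first by rewrite /adj xP.
    by move/forallP: Hadj => /(_ y); rewrite !inE yi yS.
  move/inTP=> [k kS H]; apply/inTP.
  case xk: ((x, k) \in K).
    exists k; first by rewrite !inE kS orbT.
    move=> y; rewrite !inE => /orP[/eqP->|yS]; [by auto | exact: H].
  have kx : (k, x) \in K by move: (hxK k kS); rewrite /adj xk.
  exists x; first by rewrite !inE eqxx.
  move=> y; rewrite !inE => /orP[/eqP->|yS]; first by auto.
  right; case: (eqVneq y k) => [->//|yk].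
  case: (H y yS) => [/eqP|yk']; first by rewrite (negbTE yk).
  move: (hxK y yS); rewrite /adj => /orP[xy|//].
  by case: (dag_no3 dK xy yk' kx).
- subst S.
  have [iT _ _] := and3P DT.
  have xi : x != i by apply: contraNneq xnS => ->.
  move: Hadj; rewrite negb_forall => /existsP[y0]; rewrite negb_imply !inE.
  case/andP=> /andP[y0i y0T] nadj.
  move/inTP=> [k kS H]; apply/inTP.
  case: (eqVneq k x) => [kx|kx].
    subst k; have y0x : y0 != x by apply: contraNneq xnS => <-.
    case: (H y0); first by rewrite !inE y0T orbT.
      by move/eqP; rewrite (negbTE y0x).
    move=> e; have: adj Hh x y0 by apply: sH2; rewrite 1?eq_sym // /adj e orbT.
    by move/(adjHG xi y0i); rewrite (negbTE nadj).
  exists k.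
    by move: kS; rewrite !inE (negbTE kx).
  by move=> y yT; apply: H; rewrite !inE yT orbT.
Qed.

End Valid.

Lemma Dset_card S : Dset S -> (1 < #|S|)%N.
Proof.
case/and3P=> iS _ /existsP[j /andP[jS]]; rewrite /Nset inE => /andP[_ jSst].
have ji : j != i by apply: contraNneq hi => <-.
apply: leq_trans (subset_leq_card (_ : [set i; j] \subset S)).
  by rewrite cards2 eq_sym ji.
by apply/subsetP => y; rewrite !inE => /orP[]/eqP->.
Qed.

Lemma pairR_D S T : pairR S T -> Dset S && Dset T.
Proof. by case/and3P=> -> ->. Qed.

Section Conn.
Variable K : digraph n.
Hypothesis hpair : forall S T, pairR S T -> inT K S = inT K T.

Lemma conn S : Dset S -> inT K S = inT K Zset.
Proof.
move eqm: #|Zset :\: S| => m; elim: m S eqm => [|m IH] S eqm DS.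
  have [_ SZ _] := and3P DS.
  suff -> : S = Zset by [].
  apply/eqP; rewrite eqEsubset SZ /=; apply/subsetP => y yZ.
  apply: contraT => yS; move/eqP: eqm; rewrite cards_eq0 => /eqP e.
  have : y \in Zset :\: S by rewrite inE yS yZ.
  by rewrite e inE.
have : (0 < #|Zset :\: S|)%N by rewrite eqm.
rewrite card_gt0 => /set0Pn[x]; rewrite inE => /andP[xS xZ].
have [iS SZ ex] := and3P DS.
have DxS : Dset (x |: S).
  apply/and3P; split; first by rewrite !inE iS orbT.
    apply/subsetP => y; rewrite in_setU1 => /orP[/eqP->//|yS]; exact: (subsetP SZ).
  by case/existsP: ex => j /andP[jS jN]; apply/existsP; exists j; rewrite in_setU1 jS orbT jN.
have e2 : #|Zset :\: (x |: S)| = m.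
  have -> : Zset :\: (x |: S) = (Zset :\: S) :\ x.
    by apply/setP => y; rewrite !inE; case: (y == x); rewrite ?andbF.
  by move: eqm; rewrite (cardsD1 x (Zset :\: S)) inE xS xZ add1n => -[].
rewrite -(IH _ e2 DxS).
case ad: [forall y in S :\ i, adj G x y].
  apply: hpair; rewrite /pairR DS DxS /=; apply/orP; left.
  by apply/existsP; exists x; rewrite xS eqxx ad.
symmetry; apply: hpair; rewrite /pairR DS DxS /=; apply/orP; right.
by apply/existsP; exists x; rewrite xS eqxx ad.
Qed.

End Conn.

Section Real.
Variable R : realFieldType.
Local Open Scope ring_scope.

Definition Rel (a b : Defs.coord n) := pairR (val a) (val b).
Definition gpart (S : Defs.coord n) : R :=
  if inT G (val S) then 1 else if inT Hh (val S) then 0 else -1.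
Definition NP : R := \sum_(a : Defs.coord n) \sum_(b : Defs.coord n) (if Rel a b then 1 else 0).
Definition Bc : R := NP + 1.
Definition wfun : point R n := fun S =>
  Bc * gpart S + (\sum_b (if Rel S b then 1 else 0)) - (\sum_a (if Rel a S then 1 else 0)).
Definition cval : R := Bc * \sum_(S : Defs.coord n) (if inT G (val S) then 1 else 0).
Definition PS (y : point R n) : R :=
  \sum_(a : Defs.coord n) \sum_(b : Defs.coord n) (if Rel a b then y a - y b else 0).

Lemma dot_w (y : point R n) :
  dot wfun y = Bc * (\sum_S gpart S * y S) + PS y.
Proof.
rewrite /dot /wfun.
under eq_bigr do rewrite mulrBl mulrDl -mulrA.
rewrite sumrB big_split /= -mulr_sumr -addrA; congr (_ + _).
rewrite /PS.
have -> : \sum_S (\sum_b (if Rel S b then 1 else 0)) * y S =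
          \sum_a \sum_b (if Rel a b then y a else 0 : R).
  apply: eq_bigr => a _; rewrite mulr_suml; apply: eq_bigr => b _.
  by case: (Rel a b); rewrite ?mul1r ?mul0r.
have -> : \sum_S (\sum_a (if Rel a S then 1 else 0)) * y S =
          \sum_a \sum_b (if Rel a b then y b else 0 : R).
  rewrite exchange_big /=.
  apply: eq_bigr => b _; rewrite mulr_suml; apply: eq_bigr => a _.
  by case: (Rel a b); rewrite ?mul1r ?mul0r.
rewrite -sumrB; apply: eq_bigr => a _; rewrite -sumrB; apply: eq_bigr => b _.
by case: (Rel a b); rewrite ?subr0.
Qed.

Lemma cimE (K : digraph n) S : cim R K S = if inT K (val S) then 1 else 0.
Proof. by []. Qed.

Definition badb (K : digraph n) (S : Defs.coord n) : bool :=
  (inT G (val S) && ~~ inT K (val S)) || (~~ inT Hh (val S) && inT K (val S)).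

Lemma g_pt K S : gpart S * cim R K S =
  (if inT G (val S) then 1 else 0) - (if badb K S then 1 else 0).
Proof.
rewrite cimE /gpart /badb; have := @mono (val S).
case: (inT G _); case: (inT Hh _); case: (inT K _) => //=; try by move/(_ isT).
all: by move=> _; rewrite ?mulr1 ?mulr0 ?subr0 ?subrr ?sub0r ?mulN1r.
Qed.

Lemma dotK K : dot wfun (cim R K) =
  cval - Bc * (\sum_S (if badb K S then 1 else 0)) + PS (cim R K).
Proof.
rewrite dot_w /cval; under eq_bigr do rewrite g_pt.
by rewrite sumrB mulrBr.
Qed.

Lemma NP_ge0 : 0 <= NP.
Proof. by apply: sumr_ge0 => a _; apply: sumr_ge0 => b _; case: (Rel a b). Qed.

Lemma PS_le K : PS (cim R K) <= NP.
Proof.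
apply: ler_sum => a _; apply: ler_sum => b _; case: (Rel a b) => //.
by rewrite !cimE; case: (inT K _); case: (inT K _); lra.
Qed.


Definition mkc (S : {set 'I_n}) (h : (1 < #|S|)%N) : Defs.coord n := exist _ S h.

Lemma sandwich2 (K : digraph n) (hs : forall S, ~~ badb K S) :
  (forall a b, adj G a b -> adj K a b) /\ (forall a b, a != b -> adj K a b -> adj Hh a b).
Proof.
have card2 : forall a b : 'I_n, a != b -> (1 < #|[set a; b]|)%N.
  by move=> a b ab; rewrite cards2 ab.
split.
  move=> a b e; have ab := adjG_neq e.
  move: (hs (mkc (card2 _ _ ab))); rewrite /badb /= !inT2 // e /=.
  by case: (adj K a b).
move=> a b ab e; move: (hs (mkc (card2 _ _ ab))); rewrite /badb /= !inT2 // e /=.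
by rewrite andbF andbT /= negbK.
Qed.

Lemma term_le0 (K : digraph n) : is_dag K -> (forall S, ~~ badb K S) ->
  forall a b, (if Rel a b then cim R K a - cim R K b else 0) <= 0.
Proof.
move=> dK hs a b; have [s1 s2] := sandwich2 hs.
case Rab: (Rel a b) => //.
have := pair_valid dK s1 s2 Rab; rewrite !cimE.
case: (inT K _); case: (inT K _) => //=; try by move/(_ isT).
all: by move=> _; lra.
Qed.

Lemma sum_le0_eq0 (I : finType) (F : I -> R) :
  (forall j, F j <= 0) -> \sum_j F j = 0 -> forall j, F j = 0.
Proof.
move=> h s j; apply/eqP; rewrite -oppr_eq0; apply/eqP.
apply: (@psumr_eq0P _ _ predT (fun j => - F j)) => //.
  by move=> k _; rewrite oppr_ge0.
by rewrite sumrN s oppr0.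
Qed.

Lemma dag_lt (K : digraph n) : ~~ [forall S, ~~ badb K S] -> dot wfun (cim R K) < cval.
Proof.
case/forallPn => S0; rewrite negbK => hb.
have h1 : 1 <= \sum_S (if badb K S then 1 else 0 : R).
  rewrite (bigD1 S0) //= hb lerDl; apply: sumr_ge0 => S _; by case: (badb K S).
have h2 : Bc <= Bc * \sum_S (if badb K S then 1 else 0 : R).
  by rewrite -{1}(mulr1 Bc) ler_wpM2l // /Bc; have := NP_ge0; lra.
rewrite dotK; have := PS_le K; have := NP_ge0; move: h2; rewrite /Bc.
set X := _ * _; set Y := PS _; lra.
Qed.

Lemma dag_le (K : digraph n) : is_dag K -> dot wfun (cim R K) <= cval.
Proof.
move=> dK; case: (boolP [forall S, ~~ badb K S]) => [hs|hs]; last by apply/ltW/dag_lt.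
have hs' := (forallP hs).
rewrite dotK big1 ?mulr0 ?subr0; last by move=> S _; rewrite (negbTE (hs' S)).
rewrite gerDl; apply: sumr_le0 => a _; apply: sumr_le0 => b _; exact: term_le0.
Qed.

Lemma dag_eq (K : digraph n) : is_dag K -> dot wfun (cim R K) = cval ->
  (forall S, cim R K S = cim R G S) \/ (forall S, cim R K S = cim R Hh S).
Proof.
move=> dK heq; case: (boolP [forall S, ~~ badb K S]) => [hs|hs]; last first.
  by have := dag_lt hs; rewrite heq ltxx.
have hs' := (forallP hs).
move: heq; rewrite dotK big1 ?mulr0 ?subr0; last by move=> S _; rewrite (negbTE (hs' S)).
move=> h; have hPS : PS (cim R K) = 0 by move: h; set Y := PS _; lra.
have ha := sum_le0_eq0 (fun a => sumr_le0 _ (fun b _ => term_le0 dK hs' a b)) hPS.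
have hab : forall a b, (if Rel a b then cim R K a - cim R K b else 0) = 0.
  by move=> a; apply: sum_le0_eq0 (ha a); exact: term_le0.
have hpair : forall S T, pairR S T -> inT K S = inT K T.
  move=> S T pST; have /andP[DS DT] := pairR_D pST.
  move: (hab (mkc (Dset_card DS)) (mkc (Dset_card DT))).
  rewrite /Rel /= pST !cimE /=.
  by case: (inT K S); case: (inT K T) => //= /eqP; rewrite ?subr0 ?sub0r ?oppr_eq0 oner_eq0.
have hc := conn hpair.
have same : forall S : Defs.coord n, ~~ Dset (val S) ->
    (inT K (val S) = inT G (val S)) /\ (inT Hh (val S) = inT G (val S)).
  move=> S nD; move: (hs' S); rewrite /badb.
  have /implyP h1 := @mono (val S); have /implyP h2 := @D3 (val S) nD.
  by move: h1 h2; case: (inT G _); case: (inT Hh _); case: (inT K _).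
case hZ: (inT K Zset); [right|left] => S; rewrite !cimE;
  case: (boolP (Dset (val S))) => DS.
- by rewrite hc // hZ D1.
- by have [-> ->] := same S DS.
- by rewrite hc // hZ (negbTE (D2 DS)).
- by have [-> _] := same S DS.
Qed.

Lemma G_eq : dot wfun (cim R G) = cval.
Proof.
rewrite dotK big1 ?mulr0 ?subr0; last first.
  move=> S _; rewrite /badb; have /implyP := @mono (val S).
  by case: (inT G _); case: (inT Hh _).
rewrite /PS big1 ?addr0 // => a _; rewrite big1 // => b _.
case Rab: (Rel a b) => //; have /andP[Da Db] := pairR_D Rab.
by rewrite !cimE (negbTE (D2 Da)) (negbTE (D2 Db)) subrr.
Qed.

Lemma H_eq : dot wfun (cim R Hh) = cval.
Proof.
rewrite dotK big1 ?mulr0 ?subr0; last first.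
  move=> S _; rewrite /badb; have /implyP := @mono (val S).
  by case: (inT G _); case: (inT Hh _).
rewrite /PS big1 ?addr0 // => a _; rewrite big1 // => b _.
case Rab: (Rel a b) => //; have /andP[Da Db] := pairR_D Rab.
by rewrite !cimE (D1 Da) (D1 Db) subrr.
Qed.

End Real.

Section Final.
Variable R : realFieldType.
Local Open Scope ring_scope.

Lemma dot_conv (w : point R n) (I : finType) (l : I -> R) (f : I -> point R n) (x : point R n) :
  (forall S, x S = \sum_k l k * f k S) -> dot w x = \sum_k l k * dot w (f k).
Proof.
move=> hx; rewrite /dot; under eq_bigr do rewrite hx mulr_sumr.
rewrite exchange_big /=; apply: eq_bigr => k _; rewrite mulr_sumr.
by apply: eq_bigr => S _; rewrite mulrCA.
Qed.

Lemma sum_ind (I : finType) (j : I) (a : R) (F : I -> R) :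
  \sum_k (if k == j then a else 0) * F k = a * F j.
Proof.
by rewrite (bigD1 j) //= eqxx big1 ?addr0 // => k /negbTE ->; rewrite mul0r.
Qed.

Lemma main_in (hne : Hh != G) : is_edge (@CIM R n) (cim R G) (cim R Hh).
Proof.
split.
  have : ~~ ([set (j, i) | j in Sst] \subset G).
    by apply: contra hne => /setUidPl; rewrite /Hh /add_parents => ->.
  case/subsetPn => p /imsetP[j jS ->] jG.
  have ji : j != i by apply: contraNneq hi => <-.
  have Dij : Dset [set i; j].
    apply/and3P; split; first by rewrite !inE eqxx.
      by apply/subsetP => y; rewrite !inE => /orP[]/eqP->; rewrite ?eqxx ?jS ?orbT.
    apply/existsP; exists j; rewrite !inE eqxx orbT /=.
    by rewrite jG jS.
  exists (mkc (Dset_card Dij)); rewrite !cimE /= (negbTE (D2 Dij)) (D1 Dij).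
  by rewrite eq_sym oner_neq0.
exists (wfun R), (cval R); split.
  move=> x [l [l0 [lA [l1 lx]]]].
  rewrite (dot_conv _ lx) -[cval R]mul1r -l1 mulr_suml.
  apply: ler_sum => K _; case: (boolP (is_dag K)) => dK.
    by apply: ler_wpM2l => //; apply: dag_le.
  by rewrite (lA K dK) !mul0r.
move=> x; split.
  move=> [l [l0 [_ [l1 lx]]]].
  rewrite big_bool /= in l1.
  split; last first.
    rewrite (dot_conv _ lx) big_bool /= G_eq H_eq -mulrDl l1 mul1r //.
  exists (fun K => (if K == G then l true else 0) + (if K == Hh then l false else 0)).
  split.
    by move=> K; apply: addr_ge0; case: (_ == _).
  split.
    move=> K /= dK; have -> : (K == G) = false.
      by apply/negP => /eqP e; move: dK; rewrite e dG.
    have -> : (K == Hh) = false.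
      by apply/negP => /eqP e; move: dK; rewrite e dH.
    by rewrite addr0.
  split.
    rewrite big_split /=.
    have e1 : forall (K0 : digraph n) (a : R), \sum_K (if K == K0 then a else 0) = a.
      move=> K0 a; rewrite -[RHS]mulr1 -(sum_ind K0 a (fun _ => 1)).
      by apply: eq_bigr => k _; rewrite mulr1.
    by rewrite !e1.
  move=> S; rewrite lx big_bool /=.
  under eq_bigr do rewrite mulrDl.
  by rewrite big_split /= (sum_ind G (l true) (fun K => cim R K S))
     (sum_ind Hh (l false) (fun K => cim R K S)).
move=> [[l [l0 [lA [l1 lx]]]] hdot].
have hsum : \sum_K l K * (cval R - dot (wfun R) (cim R K)) = 0.
  under eq_bigr do rewrite mulrBr.
  by rewrite sumrB -mulr_suml l1 mul1r -(dot_conv _ lx) hdot subrr.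
have hnn : forall K', predT K' -> 0 <= l K' * (cval R - dot (wfun R) (cim R K')).
  move=> K' _; case: (boolP (is_dag K')) => dK.
    by apply: mulr_ge0 => //; rewrite subr_ge0; apply: dag_le.
  by rewrite (lA K' dK) mul0r.
have hz : forall K, l K = 0 \/ dot (wfun R) (cim R K) = cval R.
  move=> K; have := @psumr_eq0P _ _ predT _ hnn hsum K isT.
  move/eqP; rewrite mulf_eq0 subr_eq0 => /orP[/eqP|/eqP]; auto.
pose isG K := [forall S, cim R K S == cim R G S].
exists (fun t => if t then \sum_(K | isG K) l K else \sum_(K | ~~ isG K) l K).
split.
  by case=> //; apply: sumr_ge0 => K _.
split; first by [].
split.
  by rewrite big_bool /= -l1 [in RHS](bigID isG).
move=> S; rewrite big_bool /= lx (bigID isG) /= !mulr_suml; congr (_ + _).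
  by apply: eq_bigr => K /forallP /(_ S) /eqP ->.
apply: eq_bigr => K nG.
case: (hz K) => [->|hK]; first by rewrite !mul0r.
case: (boolP (is_dag K)) => dK; last by rewrite (lA K dK) !mul0r.
case: (dag_eq dK hK) => hK'.
  by move: nG; rewrite /isG; have -> : [forall S, cim R K S == cim R G S]
    by apply/forallP => S'; rewrite hK'.
by rewrite hK'.
Qed.

End Final.
End Main.

Theorem mainTheorem6 (R : realFieldType) (n : nat) (i : 'I_n) (Sst : {set 'I_n})
    (G : digraph n) :
  i \notin Sst ->
  is_dag G ->
  (forall j k, j \in Sst -> k \in Sst -> (j, k) \notin G) ->
  is_dag (add_parents G i Sst) ->
  add_parents G i Sst != G ->
  is_edge (@CIM R n) (cim R G) (cim R (add_parents G i Sst)).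
Proof.
move=> h1 h2 h3 h4 h5; exact: (main_in h1 h2 h3 h4 R h5).
Qed.
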